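(* Let $I$ be a nonempty open real interval, let $\varphi:I\to\mathbb{R}$ be a strictly monotone function, let $f:I\to\mathbb{R}$ be a function that is not identically zero, and let $t\in\,]0,1[\,$. Then the following assertions are equivalent: (i) $(\varphi,f)$ satisfies \[ \big(tf(x)+(1-t)f(y)\big)\varphi(tx+(1-t)y)=tf(x)\varphi(x)+(1-t)f(y)\varphi(y) \qquad\text{for all } x,y\in I; \] (ii) $f$ is nowhere zero on $I$, $f$ and $\varphi$ are twice differentiable on $I$ with $2f'\varphi'+f\varphi''=0$ on $I$, and there exists $p\in\mathbb{R}$ with $(t-\frac12)p=0$ such that $f''=pf$ on $I$; (iii) $f$ is nowhere zero on $I$ and there exists $p\in\mathbb{R}$ with $(t-\frac12)p=0$ such that $(f,f\cdot\varphi)\sim(S_p,C_p)$ on $I$.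
   Context: For $p\in\mathbb{R}$, the functions $S_p,C_p:\mathbb{R}\to\mathbb{R}$ are defined by $S_p(x)=\sin(\sqrt{-p}\,x)$, $C_p(x)=\cos(\sqrt{-p}\,x)$ if $p<0$; $S_p(x)=x$, $C_p(x)=1$ if $p=0$; $S_p(x)=\sinh(\sqrt{p}\,x)$, $C_p(x)=\cosh(\sqrt{p}\,x)$ if $p>0$. Two pairs of functions $(f,g):I\to\mathbb{R}^2$ and $(h,k):I\to\mathbb{R}^2$ are called equivalent, written $(f,g)\sim(h,k)$, if there exist constants $a,b,c,d\in\mathbb{R}$ with $ad\neq cb$ such that $h=af+bg$ and $k=cf+dg$ on $I$. *)

(* Defs.v *)
From Stdlib Require Import Reals.
From Coquelicot Require Import Coquelicot.
Open Scope R_scope.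

Definition S_ (p x : R) : R :=
  if Rlt_dec p 0 then sin (sqrt (- p) * x)
  else if Req_EM_T p 0 then x
  else sinh (sqrt p * x).

Definition C_ (p x : R) : R :=
  if Rlt_dec p 0 then cos (sqrt (- p) * x)
  else if Req_EM_T p 0 then 1
  else cosh (sqrt p * x).

(* Membership in the open interval ]a,b[ with a, b extended reals
   (this covers all nonempty open real intervals when a < b). *)
Definition in_I (a b : Rbar) (x : R) : Prop := Rbar_lt a x /\ Rbar_lt x b.

Definition strictly_monotone_on (a b : Rbar) (phi : R -> R) : Prop :=
  (forall x y, in_I a b x -> in_I a b y -> x < y -> phi x < phi y) \/
  (forall x y, in_I a b x -> in_I a b y -> x < y -> phi y < phi x).

Definition pair_equiv_on (a b : Rbar) (f g h k : R -> R) : Prop :=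
  exists c1 c2 c3 c4 : R, c1 * c4 <> c3 * c2 /\
    forall x, in_I a b x ->
      h x = c1 * f x + c2 * g x /\ k x = c3 * f x + c4 * g x.

Definition twice_diff_on (a b : Rbar) (f : R -> R) : Prop :=
  forall x, in_I a b x -> ex_derive f x /\ ex_derive (Derive f) x.

(* Main.v *)
Require Import Defs.
From Stdlib Require Import Reals Lra.
From Coquelicot Require Import Coquelicot.
Open Scope R_scope.

Lemma ball_R (x e y : R) : ball x e y <-> Rabs (y - x) < e.
Proof. unfold ball; simpl; unfold AbsRing_ball, abs, minus, plus, opp; simpl. tauto. Qed.

Definition openP (U : R -> Prop) := forall x, U x -> exists e : posreal, forall y, Rabs (y - x) < e -> U y.

Lemma loc_open (U : R -> Prop) x : openP U -> U x -> locally x U.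
Proof. intros HU Hx. destruct (HU x Hx) as [e He]. exists e. intros y Hy. apply He. now apply ball_R. Qed.

Lemma loc_open_imp (U P : R -> Prop) x : openP U -> U x -> (forall y, U y -> P y) -> locally x P.
Proof. intros HU Hx H. destruct (HU x Hx) as [e He]. exists e. intros y Hy. apply H, He. now apply ball_R. Qed.

Lemma open_win c r : openP (fun y => Rabs (y - c) < r).
Proof. intros x Hx. assert (0 < r - Rabs (x - c)) by lra. exists (mkposreal _ H). simpl. intros y Hy.
 pose proof (Rabs_triang (y - x) (x - c)). replace (y - x + (x - c)) with (y - c) in H0 by ring. lra. Qed.

Lemma in_I_open a b : openP (in_I a b).
Proof. intros x [Ha Hb].
 assert (He : exists e, 0 < e /\ Rbar_lt a (x - e) /\ Rbar_lt (x + e) b).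
 { destruct a as [a| |]; destruct b as [b| |]; simpl in *; try contradiction.
   - exists (Rmin (x - a) (b - x) / 2).
     pose proof (Rmin_l (x - a) (b - x)). pose proof (Rmin_r (x - a) (b - x)).
     split. apply Rmin_case; lra. lra.
   - exists ((x - a)/2). lra.
   - exists ((b - x)/2). lra.
   - exists 1. lra. }
 destruct He as [e [He [H1 H2]]]. exists (mkposreal e He). simpl. intros y Hy.
 apply Rabs_def2 in Hy. split.
 - destruct a as [a| |]; simpl in *; auto; lra.
 - destruct b as [b| |]; simpl in *; auto; lra.
Qed.

Lemma in_I_between a b x y z : in_I a b x -> in_I a b y -> x <= z <= y -> in_I a b z.
Proof. intros [H1 H2] [H3 H4] Hz. split.
 - destruct a as [a| |]; simpl in *; auto; lra.
 - destruct b as [b| |]; simpl in *; auto; lra.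
Qed.

Lemma in_I_comb a b x y t : in_I a b x -> in_I a b y -> 0 <= t <= 1 -> in_I a b (t * x + (1 - t) * y).
Proof. intros Hx Hy Ht. destruct (Rle_dec x y).
 - apply (in_I_between a b x y); auto. nra.
 - apply (in_I_between a b y x); auto. nra.
Qed.

Definition C0on (U : R -> Prop) (u : R -> R) := forall y, U y -> continuous u y.
Definition C1on (U : R -> Prop) (u : R -> R) := forall y, U y -> ex_derive u y.
Definition C2on (U : R -> Prop) (u : R -> R) := forall y, U y -> ex_derive u y /\ ex_derive (Derive u) y.

Lemma C2_C1 U u : C2on U u -> C1on U u.
Proof. intros H y Hy; apply H, Hy. Qed.
Lemma C1_C0 U u : C1on U u -> C0on U u.
Proof. intros H y Hy; exact (@ex_derive_continuous R_AbsRing R_NormedModule u y (H y Hy)). Qed.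

Lemma C0_ext U u v : openP U -> (forall y, U y -> u y = v y) -> C0on U u -> C0on U v.
Proof. intros HU He H y Hy. unfold continuous. rewrite <- (He y Hy).
 apply (filterlim_ext_loc u v). apply (loc_open_imp U); auto. apply H, Hy. Qed.

Lemma C1_ext U u v : openP U -> (forall y, U y -> u y = v y) -> C1on U u -> C1on U v.
Proof. intros HU He H y Hy. apply (ex_derive_ext_loc u v). apply (loc_open_imp U); auto. apply H, Hy. Qed.

Lemma Derive_ext_open U u v : openP U -> (forall y, U y -> u y = v y) -> forall y, U y -> Derive u y = Derive v y.
Proof. intros HU He y Hy. apply Derive_ext_loc. apply (loc_open_imp U); auto. Qed.

Lemma C2_ext U u v : openP U -> (forall y, U y -> u y = v y) -> C2on U u -> C2on U v.
Proof. intros HU He H y Hy. split.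
 - apply (ex_derive_ext_loc u v). apply (loc_open_imp U); auto. apply H, Hy.
 - apply (ex_derive_ext_loc (Derive u) (Derive v)). apply (loc_open_imp U); auto.
   apply Derive_ext_open; auto. apply H, Hy. Qed.

Lemma C2_sub U V u : (forall y, V y -> U y) -> C2on U u -> C2on V u.
Proof. intros H1 H y Hy; apply H, H1, Hy. Qed.
Lemma C1_sub U V u : (forall y, V y -> U y) -> C1on U u -> C1on V u.
Proof. intros H1 H y Hy; apply H, H1, Hy. Qed.
Lemma C0_sub U V u : (forall y, V y -> U y) -> C0on U u -> C0on V u.
Proof. intros H1 H y Hy; apply H, H1, Hy. Qed.

Definition convexP (J : R -> Prop) := forall x y z, J x -> J y -> x <= z <= y -> J z.

Definition FE (J : R -> Prop) (f phi : R -> R) (t : R) :=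
  forall x y, J x -> J y ->
    (t * f x + (1 - t) * f y) * phi (t * x + (1 - t) * y) = t * f x * phi x + (1 - t) * f y * phi y.

Record Reg (J : R -> Prop) (f phi : R -> R) (t : R) : Prop := {
  r_open : openP J;
  r_conv : convexP J;
  r_t : 0 < t < 1;
  r_fe : FE J f phi t;
  r_pos : forall x, J x -> 0 < f x;
  r_inc : forall x y, J x -> J y -> x < y -> phi x < phi y }.

Lemma conv_comb J x y t : convexP J -> J x -> J y -> 0 <= t <= 1 -> J (t * x + (1 - t) * y).
Proof. intros HJ Hx Hy Ht. destruct (Rle_dec x y).
 - apply (HJ x y); auto. nra.
 - apply (HJ y x); auto. nra.
Qed.

Lemma FE' J f phi t x y : FE J f phi t -> J x -> J y ->
  t * f x * (phi (t * x + (1 - t) * y) - phi x) = (1 - t) * f y * (phi y - phi (t * x + (1 - t) * y)).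
Proof. intros H Hx Hy. specialize (H x y Hx Hy). lra. Qed.

Lemma reg_le J f phi t x y : Reg J f phi t -> J x -> J y -> x <= y -> phi x <= phi y.
Proof. intros H Hx Hy [Hl|He]. left; apply (r_inc _ _ _ _ H); auto. subst; lra. Qed.

Lemma local_bounds J f phi t z : Reg J f phi t -> J z ->
  exists r, 0 < r /\ exists beta B, 0 < beta /\ forall w, Rabs (w - z) < r -> J w /\ beta <= f w /\ f w <= B.
Proof.
 intros H Hz. destruct (r_t _ _ _ _ H) as [t0 t1].
 destruct (r_open _ _ _ _ H z Hz) as [[e epos] He]. simpl in He.
 assert (Jw : forall w, Rabs (w - z) < e -> J w) by exact He.
 set (r := t * e / 8).
 assert (rpos : 0 < r) by (unfold r; nra).
 assert (re : r < e / 2) by (unfold r; nra).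
 set (xl := z - e/2). set (xr := z + e/2).
 assert (Jxl : J xl) by (apply Jw; unfold xl; rewrite Rabs_left; lra).
 assert (Jxr : J xr) by (apply Jw; unfold xr; rewrite Rabs_right; lra).
 assert (Jzr : J (z - r)) by (apply Jw; rewrite Rabs_left; lra).
 assert (Jzr' : J (z + r)) by (apply Jw; rewrite Rabs_right; lra).
 set (mM := t * xl + (1 - t) * (z + r)).
 assert (JmM : J mM) by (apply conv_comb; auto; [apply (r_conv _ _ _ _ H)|lra]).
 assert (mMlt : mM < z - r) by (unfold mM, xl, r; nra).
 set (mM' := t * (z + r) + (1 - t) * xr).
 assert (JmM' : J mM') by (apply conv_comb; auto; [apply (r_conv _ _ _ _ H)|lra]).
 assert (mMlt' : mM' < xr) by (unfold mM', xr; nra).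
 set (d1 := phi (z - r) - phi mM).
 assert (d1pos : 0 < d1) by (unfold d1; pose proof (r_inc _ _ _ _ H mM (z - r) JmM Jzr mMlt); lra).
 set (d2 := phi xr - phi mM').
 assert (d2pos : 0 < d2) by (unfold d2; pose proof (r_inc _ _ _ _ H mM' xr JmM' Jxr mMlt'); lra).
 set (d3 := phi xr - phi (z - r)).
 assert (d3pos : 0 < d3) by (unfold d3; pose proof (r_inc _ _ _ _ H (z - r) xr Jzr Jxr ltac:(unfold xr; lra)); lra).
 pose proof (r_pos _ _ _ _ H xl Jxl) as fxl. pose proof (r_pos _ _ _ _ H xr Jxr) as fxr.
 exists r. split; auto.
 exists ((1 - t) * f xr * d2 / (t * d3)), (t * f xl * (phi mM - phi xl) / ((1 - t) * d1)).
 split. { apply Rdiv_lt_0_compat; apply Rmult_lt_0_compat; try nra. }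
 intros w Hw. assert (Jw' : J w) by (apply Jw; lra). split; auto.
 apply Rabs_def2 in Hw. pose proof (r_pos _ _ _ _ H w Jw') as fw.
 split.
 -
   set (m := t * w + (1 - t) * xr).
   assert (Jm : J m) by (apply conv_comb; auto; [apply (r_conv _ _ _ _ H)|lra]).
   pose proof (FE' _ _ _ _ w xr (r_fe _ _ _ _ H) Jw' Jxr) as E. fold m in E.
   assert (h1 : phi m <= phi mM') by (apply (reg_le J f phi t); auto; unfold m, mM'; nra).
   assert (h2 : phi m <= phi xr) by (apply (reg_le J f phi t); auto; unfold m, xr; nra).
   assert (h3 : phi (z - r) <= phi w) by (apply (reg_le J f phi t); auto; lra).
   assert (h4 : (1 - t) * f xr * d2 <= t * f w * d3).
   { unfold d2, d3. apply Rle_trans with ((1 - t) * f xr * (phi xr - phi m)).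
     apply Rmult_le_compat_l; nra.
     rewrite <- E. apply Rmult_le_compat_l; nra. }
   apply Rmult_le_reg_r with (t * d3). nra.
   unfold Rdiv. rewrite Rmult_assoc, Rinv_l by nra. nra.
 -
   set (m := t * xl + (1 - t) * w).
   assert (Jm : J m) by (apply conv_comb; auto; [apply (r_conv _ _ _ _ H)|lra]).
   pose proof (FE' _ _ _ _ xl w (r_fe _ _ _ _ H) Jxl Jw') as E. fold m in E.
   assert (h1 : phi m <= phi mM) by (apply (reg_le J f phi t); auto; unfold m, mM; nra).
   assert (h4 : (1 - t) * f w * d1 <= t * f xl * (phi mM - phi xl)).
   { unfold d1. apply Rle_trans with ((1 - t) * f w * (phi w - phi m)).
     apply Rmult_le_compat_l. nra. 
     assert (phi (z - r) <= phi w) by (apply (reg_le J f phi t); auto; lra). lra.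
     rewrite <- E. apply Rmult_le_compat_l; nra. }
   apply Rmult_le_reg_r with ((1 - t) * d1). nra.
   unfold Rdiv. rewrite Rmult_assoc, Rinv_l by nra. nra.
Qed.

Lemma right_cont J f phi t z : Reg J f phi t -> J z ->
  forall eps, 0 < eps -> exists d, 0 < d /\ forall w, z <= w < z + d -> phi w - phi z < eps.
Proof.
 intros H Hz eps Heps. destruct (r_t _ _ _ _ H) as [t0 t1].
 destruct (local_bounds J f phi t z H Hz) as [r [rpos [beta [B [bpos HB]]]]].
 assert (Bb : beta <= B) by (destruct (HB z ltac:(rewrite Rminus_diag, Rabs_R0; lra)) as [_ [? ?]]; lra).
 set (K := t * B / ((1 - t) * beta)).
 assert (Kpos : 0 < K) by (unfold K; apply Rdiv_lt_0_compat; nra).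
 set (S := fun v => exists x, z - r < x < z /\ v = phi x).
 assert (Sb : bound S).
 { exists (phi z). intros v [x [Hx ->]]. apply (reg_le J f phi t); auto. apply HB. rewrite Rabs_left; lra. lra. }
 assert (Sne : exists v, S v) by (exists (phi (z - r/2)); exists (z - r/2); split; [lra|auto]).
 destruct (completeness S Sb Sne) as [L [HL1 HL2]].
 assert (Hx1 : exists x1, z - r < x1 < z /\ L - eps / K < phi x1).
 { apply Classical_Prop.NNPP. intros Hn. 
   assert (L <= L - eps / K). { apply HL2. intros v [x [Hx ->]]. apply Rnot_lt_le. intro. apply Hn. exists x. auto. }
   assert (0 < eps / K) by (apply Rdiv_lt_0_compat; auto). lra. }
 destruct Hx1 as [x1 [Hx1 Hphx1]].
 set (u := Rmin (z - x1) (r * (1 - t))).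
 assert (upos : 0 < u) by (unfold u; apply Rmin_case; nra).
 assert (u1 : u <= z - x1) by apply Rmin_l.
 assert (u2 : u <= r * (1 - t)) by apply Rmin_r.
 set (x := z - u). set (y := z + t * u / (2 * (1 - t))). set (m := z - t * u / 2).
 assert (ym : t * u / (2 * (1 - t)) <= t * r / 2).
 { apply Rmult_le_reg_r with (2 * (1 - t)). nra. unfold Rdiv. rewrite Rmult_assoc, Rinv_l by nra. nra. }
 assert (ypos : 0 < t * u / (2 * (1 - t))) by (apply Rdiv_lt_0_compat; nra).
 destruct (HB x ltac:(unfold x; rewrite Rabs_left; lra)) as [Jx [fx1 fx2]].
 destruct (HB y ltac:(unfold y; rewrite Rabs_right; lra)) as [Jy [fy1 fy2]].
 assert (Hm : t * x + (1 - t) * y = m) by (unfold x, y, m; field; lra).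
 pose proof (FE' _ _ _ _ x y (r_fe _ _ _ _ H) Jx Jy) as E. rewrite Hm in E.
 assert (Jm : J m) by (rewrite <- Hm; apply conv_comb; auto; [apply (r_conv _ _ _ _ H)|lra]).
 assert (h1 : phi x1 <= phi x) by (apply (reg_le J f phi t); auto; [apply HB; rewrite Rabs_left; lra | unfold x; lra]).
 assert (tur : t * u < r) by nra.
 assert (h2 : phi m <= L) by (apply HL1; exists m; split; [unfold m; split; nra | auto]).
 assert (h3 : phi m <= phi z) by (apply (reg_le J f phi t); auto; unfold m; nra).
 assert (h4 : phi m < phi y) by (apply (r_inc J f phi t); auto; unfold m, y; nra).
 assert (h5 : phi x < phi m) by (apply (r_inc J f phi t); auto; unfold m, x; nra).
 assert (A : (1 - t) * beta * (phi y - phi z) < (1 - t) * beta * eps).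
 { apply Rle_lt_trans with ((1 - t) * f y * (phi y - phi m)).
   { destruct (Rle_dec (phi y) (phi z)). 
     - assert (0 <= (1 - t) * beta) by nra. assert (0 < (1-t) * f y) by nra.
       assert (0 < (1-t) * f y * (phi y - phi m)) by (apply Rmult_lt_0_compat; lra).
       assert ((1 - t) * beta * (phi y - phi z) <= 0). { apply Rmult_le_0_l; lra. } lra.
     - apply Rmult_le_compat; nra. }
   rewrite <- E. apply Rle_lt_trans with (t * B * (phi m - phi x)).
   apply Rmult_le_compat_r; nra.
   assert (phi m - phi x < eps / K) by lra.
   replace ((1 - t) * beta * eps) with (t * B * (eps / K)) by (unfold K; field; lra).
   apply Rmult_lt_compat_l; nra. }
 assert (Hy : phi y - phi z < eps) by (apply Rmult_lt_reg_l with ((1 - t) * beta); nra).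
 exists (t * u / (2 * (1 - t))). split; auto.
 intros w Hw. 
 assert (Jw : J w) by (apply HB; rewrite Rabs_right; lra).
 assert (phi w <= phi y) by (apply (reg_le J f phi t); auto; unfold y; lra). lra.
Qed.

Lemma reg_reflect J f phi t : Reg J f phi t ->
  Reg (fun x => J (- x)) (fun x => f (- x)) (fun x => - phi (- x)) (1 - t).
Proof. intros H. destruct H as [Ho Hc Ht Hfe Hp Hi]. split.
 - intros x Hx. destruct (Ho _ Hx) as [e He]. exists e. intros y Hy. apply He.
   replace (- y - - x) with (- (y - x)) by ring. now rewrite Rabs_Ropp.
 - intros x y z Hx Hy Hz. apply (Hc (- y) (- x)); auto; lra.
 - lra.
 - intros x y Hx Hy. specialize (Hfe (- y) (- x) Hy Hx).
   replace (- ((1 - t) * x + (1 - (1 - t)) * y)) with (t * - y + (1 - t) * - x) by ring.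
   lra.
 - intros x Hx; auto.
 - intros x y Hx Hy Hxy. specialize (Hi (- y) (- x) Hy Hx ltac:(lra)). lra.
Qed.

Lemma left_cont J f phi t z : Reg J f phi t -> J z ->
  forall eps, 0 < eps -> exists d, 0 < d /\ forall w, z - d < w <= z -> phi z - phi w < eps.
Proof.
 intros H Hz eps Heps.
 destruct (right_cont _ _ _ _ (- z) (reg_reflect J f phi t H) ltac:(cbv beta; rewrite Ropp_involutive; auto) eps Heps) as [d [dpos Hd]].
 exists d. split; auto. intros w Hw. specialize (Hd (- w) ltac:(lra)). simpl in Hd.
 rewrite !Ropp_involutive in Hd. lra.
Qed.

Lemma reg_cont J f phi t z : Reg J f phi t -> J z -> continuous phi z.
Proof.
 intros H Hz. apply continuity_pt_filterlim.
 unfold continuity_pt, continue_in, limit1_in, limit_in. simpl. unfold R_dist.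
 intros eps Heps.
 destruct (right_cont J f phi t z H Hz eps Heps) as [d1 [d1p H1]].
 destruct (left_cont J f phi t z H Hz eps Heps) as [d2 [d2p H2]].
 destruct (r_open _ _ _ _ H z Hz) as [[e epos] He]. simpl in He.
 exists (Rmin e (Rmin d1 d2)). split. { repeat apply Rmin_case; lra. }
 intros w [_ Hw]. simpl in Hw. unfold R_dist in *.
 pose proof (Rmin_l e (Rmin d1 d2)). pose proof (Rmin_r e (Rmin d1 d2)).
 pose proof (Rmin_l d1 d2). pose proof (Rmin_r d1 d2).
 assert (Jw : J w) by (apply He; lra).
 apply Rabs_def2 in Hw.
 destruct (Rle_dec z w).
 - specialize (H1 w ltac:(lra)). assert (phi z <= phi w) by (apply (reg_le J f phi t); auto).
   rewrite Rabs_right; lra.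
 - specialize (H2 w ltac:(lra)). assert (phi w <= phi z) by (apply (reg_le J f phi t); auto; lra).
   rewrite Rabs_left1; lra.
Qed.

Ltac eta_D := repeat match goal with |- context [Derive (fun x : R => ?g x)] => change (Derive (fun x : R => g x)) with (Derive g) end.

Lemma C0_const U c : C0on U (fun _ => c).
Proof. intros y _. apply continuous_const. Qed.
Lemma C0_plus U u v : C0on U u -> C0on U v -> C0on U (fun y => u y + v y).
Proof. intros Hu Hv y Hy. apply (@continuous_plus R_UniformSpace R_AbsRing R_NormedModule); auto. Qed.
Lemma C0_opp U u : C0on U u -> C0on U (fun y => - u y).
Proof. intros Hu y Hy. apply (@continuous_opp R_UniformSpace R_AbsRing R_NormedModule); auto. Qed.
Lemma C0_minus U u v : C0on U u -> C0on U v -> C0on U (fun y => u y - v y).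
Proof. intros Hu Hv. apply C0_plus; auto. apply C0_opp; auto. Qed.
Lemma C0_mult U u v : C0on U u -> C0on U v -> C0on U (fun y => u y * v y).
Proof. intros Hu Hv y Hy. apply (@continuous_mult R_UniformSpace R_AbsRing); auto. Qed.
Lemma C0_div U u v : C0on U u -> C0on U v -> (forall y, U y -> v y <> 0) -> C0on U (fun y => u y / v y).
Proof. intros Hu Hv Hn y Hy. apply (@continuous_mult R_UniformSpace R_AbsRing); auto.
 apply continuous_Rinv_comp; auto. Qed.
Lemma C0_comp_aff U V u al be : C0on U u -> (forall y, V y -> U (al * y + be)) -> C0on V (fun y => u (al * y + be)).
Proof. intros Hu HV y Hy. apply (continuous_comp (fun y => al * y + be) u). 
 apply (@continuous_plus R_UniformSpace R_AbsRing R_NormedModule).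
 apply (@continuous_scal R_UniformSpace R_AbsRing R_NormedModule). apply continuous_const. apply continuous_id.
 apply continuous_const. apply Hu, HV, Hy. Qed.

Lemma C1_const U c : C1on U (fun _ => c).
Proof. intros y _. apply ex_derive_const. Qed.
Lemma C1_plus U u v : C1on U u -> C1on U v -> C1on U (fun y => u y + v y).
Proof. intros Hu Hv y Hy. specialize (Hu y Hy). specialize (Hv y Hy). auto_derive; auto. Qed.
Lemma C1_minus U u v : C1on U u -> C1on U v -> C1on U (fun y => u y - v y).
Proof. intros Hu Hv y Hy. specialize (Hu y Hy). specialize (Hv y Hy). auto_derive; auto. Qed.
Lemma C1_mult U u v : C1on U u -> C1on U v -> C1on U (fun y => u y * v y).
Proof. intros Hu Hv y Hy. specialize (Hu y Hy). specialize (Hv y Hy). auto_derive; auto. Qed.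
Lemma C1_div U u v : C1on U u -> C1on U v -> (forall y, U y -> v y <> 0) -> C1on U (fun y => u y / v y).
Proof. intros Hu Hv Hn y Hy. specialize (Hn y Hy). specialize (Hu y Hy). specialize (Hv y Hy). auto_derive; auto. Qed.
Lemma C1_comp_aff U V u al be : C1on U u -> (forall y, V y -> U (al * y + be)) -> C1on V (fun y => u (al * y + be)).
Proof. intros Hu HV y Hy. specialize (Hu _ (HV y Hy)). auto_derive; auto. Qed.

Lemma C2_by U u u1 : openP U -> (forall y, U y -> is_derive u y (u1 y)) -> C1on U u1 -> C2on U u.
Proof. intros HU Hd H1 y Hy. split. exists (u1 y); auto.
 apply (ex_derive_ext_loc u1). apply (loc_open_imp U); auto. intros z Hz. symmetry. apply is_derive_unique; auto.
 apply H1, Hy. Qed.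

Lemma C2_Derive U u y : C2on U u -> U y -> is_derive u y (Derive u y).
Proof. intros H Hy. apply Derive_correct, H, Hy. Qed.

Lemma C2_D1 U u : C2on U u -> C1on U (Derive u).
Proof. intros H y Hy; apply H, Hy. Qed.

Lemma C2_const U c : openP U -> C2on U (fun _ => c).
Proof. intros HU. apply C2_by with (fun _ => 0); auto. intros; auto_derive; auto. apply C1_const. Qed.
Lemma C2_plus U u v : openP U -> C2on U u -> C2on U v -> C2on U (fun y => u y + v y).
Proof. intros HU Hu Hv. apply C2_by with (fun y => Derive u y + Derive v y); auto.
 intros y Hy. pose proof (C2_Derive U u y Hu Hy). pose proof (C2_Derive U v y Hv Hy).
 apply (is_derive_plus u v); auto.
 apply C1_plus; apply C2_D1. exact Hu. exact Hv. Qed.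
Lemma C2_minus U u v : openP U -> C2on U u -> C2on U v -> C2on U (fun y => u y - v y).
Proof. intros HU Hu Hv. apply C2_by with (fun y => Derive u y - Derive v y); auto.
 intros y Hy. pose proof (C2_Derive U u y Hu Hy). pose proof (C2_Derive U v y Hv Hy).
 apply (is_derive_minus u v); auto.
 apply C1_minus; apply C2_D1. exact Hu. exact Hv. Qed.
Lemma C2_mult U u v : openP U -> C2on U u -> C2on U v -> C2on U (fun y => u y * v y).
Proof. intros HU Hu Hv. apply C2_by with (fun y => Derive u y * v y + u y * Derive v y); auto.
 intros y Hy. destruct (Hu y Hy). destruct (Hv y Hy). auto_derive; auto. eta_D. ring.
 apply C1_plus; apply C1_mult.
 apply C2_D1; exact Hu. apply C2_C1; exact Hv. apply C2_C1; exact Hu. apply C2_D1; exact Hv. Qed.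
Lemma C2_div U u v : openP U -> C2on U u -> C2on U v -> (forall y, U y -> v y <> 0) -> C2on U (fun y => u y / v y).
Proof. intros HU Hu Hv Hn. apply C2_by with (fun y => (Derive u y * v y - u y * Derive v y) / (v y ^ 2)); auto.
 intros y Hy. destruct (Hu y Hy). destruct (Hv y Hy). specialize (Hn y Hy). auto_derive; auto. eta_D. field; auto.
 apply C1_div. apply C1_minus; apply C1_mult.
 apply C2_D1; exact Hu. apply C2_C1; exact Hv. apply C2_C1; exact Hu. apply C2_D1; exact Hv.
 apply C1_mult. apply C2_C1; exact Hv. apply C1_mult. apply C2_C1; exact Hv. apply C1_const.
 intros y Hy. specialize (Hn y Hy). simpl. rewrite Rmult_1_r. apply Rmult_integral_contrapositive; auto. Qed.
Lemma C2_comp_aff U V u al be : openP V -> C2on U u -> (forall y, V y -> U (al * y + be)) -> C2on V (fun y => u (al * y + be)).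
Proof. intros HV Hu HUV. apply C2_by with (fun y => al * Derive u (al * y + be)); auto.
 intros y Hy. pose proof (C2_Derive U u _ Hu (HUV y Hy)). auto_derive. apply Hu, HUV, Hy.
 eta_D. ring.
 apply C1_mult. apply C1_const. apply (C1_comp_aff U V (Derive u)). apply C2_D1; exact Hu. exact HUV. Qed.

Definition injP (J : R -> Prop) (phi : R -> R) := forall x y, J x -> J y -> x <> y -> phi x <> phi y.

Definition fm (f phi : R -> R) (t x0 y : R) :=
  (t * f x0 * (phi ((1 - t) * y + t * x0) - phi x0)) / ((1 - t) * (phi y - phi ((1 - t) * y + t * x0))).

Lemma fm_eq J f phi t x0 y : FE J f phi t -> 0 < t < 1 -> injP J phi -> convexP J ->
  J x0 -> J y -> y <> x0 -> f y = fm f phi t x0 y.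
Proof. intros HF Ht Hi Hc Hx Hy Hne. pose proof (FE' J f phi t x0 y HF Hx Hy) as E.
 unfold fm. replace ((1 - t) * y + t * x0) with (t * x0 + (1 - t) * y) by ring.
 assert (Jm : J (t * x0 + (1 - t) * y)) by (apply conv_comb; auto; lra).
 assert (phi y - phi (t * x0 + (1 - t) * y) <> 0).
 { intro. apply (Hi y (t * x0 + (1 - t) * y)); auto. intro. apply Hne. nra. lra. }
 rewrite E. field. split; auto. lra. Qed.

Lemma window_for J t y : openP J -> convexP J -> 0 < t < 1 -> J y ->
  exists x0 e, 0 < e /\ J x0 /\ forall w, Rabs (w - y) < e -> J w /\ w <> x0 /\ J ((1 - t) * w + t * x0).
Proof. intros Ho Hc Ht Hy. destruct (Ho y Hy) as [[e ep] He]. simpl in He.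
 exists (y - e / 2), (e / 2). split. lra.
 assert (J (y - e / 2)) by (apply He; rewrite Rabs_left; lra). split; auto.
 intros w Hw. assert (J w) by (apply He; lra). split; auto. split.
 apply Rabs_def2 in Hw. lra.
 replace ((1 - t) * w + t * (y - e / 2)) with (t * (y - e/2) + (1 - t) * w) by ring. apply conv_comb; auto; lra. Qed.

Lemma f_C0 J f phi t : FE J f phi t -> 0 < t < 1 -> injP J phi -> openP J -> convexP J ->
  C0on J phi -> C0on J f.
Proof. intros HF Ht Hi Ho Hc Hp y Hy.
 destruct (window_for J t y Ho Hc Ht Hy) as [x0 [e [ep [Hx0 HW]]]].
 set (V := fun w => Rabs (w - y) < e).
 assert (C0on V f).
 { apply (C0_ext V (fm f phi t x0)). apply open_win.
   intros w Hw. destruct (HW w Hw) as [? [? ?]]. symmetry. apply (fm_eq J); auto.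
   unfold fm. apply C0_div. apply C0_mult. apply C0_const. apply C0_minus. apply (C0_comp_aff J). auto.
   intros w Hw; apply HW, Hw. apply C0_const.
   apply C0_mult. apply C0_const. apply C0_minus. apply (C0_sub J). intros w Hw; apply HW, Hw. auto.
   apply (C0_comp_aff J). auto. intros w Hw; apply HW, Hw.
   intros w Hw. destruct (HW w Hw) as [? [? ?]]. apply Rmult_integral_contrapositive. split. lra.
   apply Rminus_eq_contra. apply Hi; auto. intro. apply H0. nra. }
 apply H. unfold V. rewrite Rminus_diag, Rabs_R0. lra. Qed.

Lemma f_C1 J f phi t : FE J f phi t -> 0 < t < 1 -> injP J phi -> openP J -> convexP J ->
  C1on J phi -> C1on J f.
Proof. intros HF Ht Hi Ho Hc Hp y Hy.
 destruct (window_for J t y Ho Hc Ht Hy) as [x0 [e [ep [Hx0 HW]]]].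
 set (V := fun w => Rabs (w - y) < e).
 assert (C1on V f).
 { apply (C1_ext V (fm f phi t x0)). apply open_win.
   intros w Hw. destruct (HW w Hw) as [? [? ?]]. symmetry. apply (fm_eq J); auto.
   unfold fm. apply C1_div. apply C1_mult. apply C1_const. apply C1_minus. apply (C1_comp_aff J). auto.
   intros w Hw; apply HW, Hw. apply C1_const.
   apply C1_mult. apply C1_const. apply C1_minus. apply (C1_sub J). intros w Hw; apply HW, Hw. auto.
   apply (C1_comp_aff J). auto. intros w Hw; apply HW, Hw.
   intros w Hw. destruct (HW w Hw) as [? [? ?]]. apply Rmult_integral_contrapositive. split. lra.
   apply Rminus_eq_contra. apply Hi; auto. intro. apply H0. nra. }
 apply H. unfold V. rewrite Rminus_diag, Rabs_R0. lra. Qed.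

Lemma f_C2 J f phi t : FE J f phi t -> 0 < t < 1 -> injP J phi -> openP J -> convexP J ->
  C2on J phi -> C2on J f.
Proof. intros HF Ht Hi Ho Hc Hp y Hy.
 destruct (window_for J t y Ho Hc Ht Hy) as [x0 [e [ep [Hx0 HW]]]].
 set (V := fun w => Rabs (w - y) < e).
 assert (HV : openP V) by apply open_win.
 assert (C2on V f).
 { apply (C2_ext V (fm f phi t x0)). apply open_win.
   intros w Hw. destruct (HW w Hw) as [? [? ?]]. symmetry. apply (fm_eq J); auto.
   unfold fm. apply C2_div; auto. apply C2_mult; auto. apply C2_const; auto. apply C2_minus; auto. apply (C2_comp_aff J); auto.
   intros w Hw; apply HW, Hw. apply C2_const; auto.
   apply C2_mult; auto. apply C2_const; auto. apply C2_minus; auto. apply (C2_sub J). intros w Hw; apply HW, Hw. auto.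
   apply (C2_comp_aff J); auto. intros w Hw; apply HW, Hw.
   intros w Hw. destruct (HW w Hw) as [? [? ?]]. apply Rmult_integral_contrapositive. split. lra.
   apply Rminus_eq_contra. apply Hi; auto. intro. apply H0. nra. }
 apply H. unfold V. rewrite Rminus_diag, Rabs_R0. lra. Qed.

Lemma Rswap1 : forall a c : R, a = c + a - c. Proof. intros; ring. Qed.

Definition Anti (h : R -> R) (m0 u : R) := RInt h m0 u.
Definition Ih (h : R -> R) (t d m : R) := RInt (fun s => t * h ((-(1-t)) * s + m) + (1-t) * h (t * s + m)) 0 d.
Definition Dh (h : R -> R) (t d m : R) := t/(1-t) * (h m - h ((-(1-t))*d + m)) + (1-t)/t * (h (t*d+m) - h m).

Lemma exRInt_win (h : R -> R) (c e a b : R) : (forall w, Rabs (w - c) < e -> continuous h w) ->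
  Rabs (a - c) < e -> Rabs (b - c) < e -> ex_RInt h a b.
Proof. intros Hh Ha Hb. apply (@ex_RInt_continuous R_CompleteNormedModule). intros z Hz. apply Hh.
 apply Rabs_def2 in Ha. apply Rabs_def2 in Hb. 
 assert (Rmin a b <= z <= Rmax a b) by auto.
 revert H. apply Rmin_case_strong; apply Rmax_case_strong; intros; apply Rabs_def1; lra. Qed.

Lemma Anti_deriv (h : R -> R) (m0 e u : R) : (forall w, Rabs (w - m0) < e -> continuous h w) ->
  Rabs (u - m0) < e -> is_derive (Anti h m0) u (h u).
Proof. intros Hh Hu. apply (is_derive_RInt h (Anti h m0) m0 u).
 - apply (loc_open_imp (fun w => Rabs (w - m0) < e)); auto. apply open_win.
   intros y Hy. unfold Anti. apply (@RInt_correct R_CompleteNormedModule). apply (exRInt_win h m0 e); auto.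
   rewrite Rminus_diag, Rabs_R0. apply Rle_lt_trans with (Rabs (u - m0)); auto. apply Rabs_pos.
 - apply Hh, Hu. Qed.

Lemma Ih_eq (h : R -> R) (t m0 e m : R) : 0 < t < 1 -> 0 < e -> (forall w, Rabs (w - m0) < e -> continuous h w) ->
  Rabs (m - m0) < e / 2 ->
  Ih h t (e/2) m = t/(1-t) * (Anti h m0 m - Anti h m0 ((-(1-t))*(e/2) + m)) + (1-t)/t * (Anti h m0 (t*(e/2)+m) - Anti h m0 m).
Proof. intros Ht He Hh Hm. apply Rabs_def2 in Hm.
 assert (W : forall w, m - e/2 <= w <= m + e/2 -> Rabs (w - m0) < e) by (intros; apply Rabs_def1; lra).
 assert (E1 : ex_RInt h ((-(1-t)) * 0 + m) ((-(1-t)) * (e/2) + m)) by (apply (exRInt_win h m0 e); auto; apply W; nra).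
 assert (E2 : ex_RInt h (t * 0 + m) (t * (e/2) + m)) by (apply (exRInt_win h m0 e); auto; apply W; nra).
 pose proof (@RInt_comp_lin R_CompleteNormedModule h (-(1-t)) m 0 (e/2) E1) as C1.
 pose proof (@RInt_comp_lin R_CompleteNormedModule h t m 0 (e/2) E2) as C2.
 pose proof (@ex_RInt_comp_lin R_CompleteNormedModule h (-(1-t)) m 0 (e/2) E1) as X1.
 pose proof (@ex_RInt_comp_lin R_CompleteNormedModule h t m 0 (e/2) E2) as X2.
 unfold Ih.
 assert (S : RInt (fun s => t * h ((-(1-t)) * s + m) + (1-t) * h (t * s + m)) 0 (e/2)
   = (-(t/(1-t))) * RInt (fun y => (-(1-t)) * (h ((-(1-t)) * y + m))) 0 (e/2)
     + (1-t)/t * RInt (fun y => t * (h (t * y + m))) 0 (e/2)).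
 { set (F1 := fun y => scal (-(1-t)) (h ((-(1-t)) * y + m))).
   set (F2 := fun y => scal t (h (t * y + m))).
   transitivity (plus (scal (-(t/(1-t))) (RInt F1 0 (e/2))) (scal ((1-t)/t) (RInt F2 0 (e/2)))); [| reflexivity].
   rewrite <- (@RInt_scal R_CompleteNormedModule F1 0 (e/2) _ X1).
   rewrite <- (@RInt_scal R_CompleteNormedModule F2 0 (e/2) _ X2).
   rewrite <- (@RInt_plus R_CompleteNormedModule).
   apply RInt_ext. intros x _. unfold F1, F2, scal; simpl; unfold mult; simpl. unfold plus; simpl. field. lra.
   apply (@ex_RInt_scal R_CompleteNormedModule); auto. apply (@ex_RInt_scal R_CompleteNormedModule); auto. }
 assert (C1' : RInt (fun y => (-(1-t)) * (h ((-(1-t)) * y + m))) 0 (e/2) = RInt h ((-(1-t)) * 0 + m) ((-(1-t)) * (e/2) + m)) by exact C1.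
 assert (C2' : RInt (fun y => t * (h (t * y + m))) 0 (e/2) = RInt h (t * 0 + m) (t * (e/2) + m)) by exact C2.
 rewrite S, C1', C2'. clear S C1 C2 C1' C2'.
 replace (-(1-t) * 0 + m) with m by ring. replace (t * 0 + m) with m by ring.
 assert (CH : forall b, m - e/2 <= b <= m + e/2 -> RInt h m b = Anti h m0 b - Anti h m0 m).
 { intros b Hb. unfold Anti. rewrite <- (@RInt_Chasles R_CompleteNormedModule h m0 m b). unfold plus; simpl. apply Rswap1.
   apply (exRInt_win h m0 e); auto. rewrite Rminus_diag, Rabs_R0; lra. apply W; lra.
   apply (exRInt_win h m0 e); auto; apply W; lra. }
 rewrite !CH by nra. match goal with |- ?a = ?b => change (@eq R a b) end. field. lra. Qed.

Lemma Ih_deriv (h : R -> R) (t m0 e m : R) : 0 < t < 1 -> 0 < e -> (forall w, Rabs (w - m0) < e -> continuous h w) ->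
  Rabs (m - m0) < e / 2 -> is_derive (Ih h t (e/2)) m (Dh h t (e/2) m).
Proof. intros Ht He Hh Hm.
 apply (is_derive_ext_loc (fun m => t/(1-t) * (Anti h m0 m - Anti h m0 ((-(1-t))*(e/2) + m)) + (1-t)/t * (Anti h m0 (t*(e/2)+m) - Anti h m0 m))).
 { apply (loc_open_imp (fun w => Rabs (w - m0) < e/2)); auto. apply open_win.
   intros y Hy. symmetry. apply Ih_eq; auto. }
 pose proof Hm as Hm'. apply Rabs_def2 in Hm'.
 assert (D1 := Anti_deriv h m0 e m Hh ltac:(apply Rabs_def1; lra)).
 assert (D2 := Anti_deriv h m0 e ((-(1-t))*(e/2) + m) Hh ltac:(apply Rabs_def1; nra)).
 assert (D3 := Anti_deriv h m0 e (t*(e/2) + m) Hh ltac:(apply Rabs_def1; nra)).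
 auto_derive.
 - repeat split; eexists; eauto.
 - eta_D. rewrite (is_derive_unique _ _ _ D1), (is_derive_unique _ _ _ D2), (is_derive_unique _ _ _ D3).
   unfold Dh. field. lra.
Qed.

Lemma C1_shift U V u c : C1on U u -> (forall y, V y -> U (c + y)) -> C1on V (fun y => u (c + y)).
Proof. intros Hu HV y Hy. specialize (Hu _ (HV y Hy)). auto_derive; auto. Qed.

Lemma reg_inj J f phi t : Reg J f phi t -> injP J phi.
Proof. intros H x y Hx Hy Hne. destruct (Rlt_dec x y).
 - pose proof (r_inc _ _ _ _ H x y Hx Hy r). lra.
 - assert (y < x) by lra. pose proof (r_inc _ _ _ _ H y x Hy Hx H0). lra. Qed.

Lemma Ih_id J f phi t m0 e m : Reg J f phi t -> 0 < e -> (forall w, Rabs (w - m0) < e -> J w) ->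
  C0on J f -> Rabs (m - m0) < e / 2 ->
  phi m * Ih f t (e/2) m = Ih (fun x => f x * phi x) t (e/2) m /\ 0 < Ih f t (e/2) m.
Proof. intros H He HJ Hf Hm. destruct (r_t _ _ _ _ H) as [t0 t1].
 apply Rabs_def2 in Hm.
 set (V := fun s => 0 <= s <= e/2).
 assert (HV1 : forall s, V s -> J (-(1-t) * s + m)) by (intros s [? ?]; apply HJ; apply Rabs_def1; nra).
 assert (HV2 : forall s, V s -> J (t * s + m)) by (intros s [? ?]; apply HJ; apply Rabs_def1; nra).
 set (F := fun s => t * f (-(1-t) * s + m) + (1-t) * f (t * s + m)).
 assert (FC : C0on V F).
 { unfold F. apply C0_plus; apply C0_mult; try apply C0_const; apply (C0_comp_aff J); auto. }
 assert (FX : ex_RInt F 0 (e/2)).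
 { apply (@ex_RInt_continuous R_CompleteNormedModule). intros z Hz. apply FC.
   rewrite Rmin_left in Hz by lra. rewrite Rmax_right in Hz by lra. auto. }
 split.
 - unfold Ih. fold F.
   transitivity (scal (phi m) (RInt F 0 (e/2))); [reflexivity|].
   rewrite <- (@RInt_scal R_CompleteNormedModule F 0 (e/2) _ FX).
   apply RInt_ext. intros s Hs. rewrite Rmin_left in Hs by lra. rewrite Rmax_right in Hs by lra.
   unfold F, scal; simpl; unfold mult; simpl.
   pose proof (r_fe _ _ _ _ H (-(1-t) * s + m) (t * s + m) (HV1 s ltac:(unfold V; lra)) (HV2 s ltac:(unfold V; lra))) as E.
   replace (t * (- (1 - t) * s + m) + (1 - t) * (t * s + m)) with m in E by ring. lra.
 - unfold Ih. fold F. apply RInt_gt_0. lra.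
   intros s Hs. unfold F. 
   pose proof (r_pos _ _ _ _ H _ (HV1 s ltac:(unfold V; lra))). pose proof (r_pos _ _ _ _ H _ (HV2 s ltac:(unfold V; lra))). nra.
   intros s Hs. apply FC. auto.
Qed.

Lemma Dh_C1 J h t e m0 : 0 < t < 1 -> 0 < e -> (forall w, Rabs (w - m0) < e -> J w) -> C1on J h ->
  C1on (fun m => Rabs (m - m0) < e / 2) (Dh h t (e/2)).
Proof. intros Ht He HJ Hh. unfold Dh.
 apply C1_plus; apply C1_mult; try apply C1_const; apply C1_minus.
 - apply (C1_sub J); auto. intros y Hy; apply HJ; apply Rabs_def2 in Hy; apply Rabs_def1; lra.
 - apply (C1_shift J); auto. intros y Hy; apply HJ; apply Rabs_def2 in Hy; apply Rabs_def1; nra.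
 - apply (C1_shift J); auto. intros y Hy; apply HJ; apply Rabs_def2 in Hy; apply Rabs_def1; nra.
 - apply (C1_sub J); auto. intros y Hy; apply HJ; apply Rabs_def2 in Hy; apply Rabs_def1; lra.
Qed.

Lemma reg_smooth J f phi t : Reg J f phi t -> C2on J phi /\ C2on J f.
Proof. intros H. destruct (r_t _ _ _ _ H) as [t0 t1].
 pose proof (reg_inj _ _ _ _ H) as Hi.
 assert (Ho := r_open _ _ _ _ H). assert (Hc := r_conv _ _ _ _ H). assert (HF := r_fe _ _ _ _ H).
 assert (P0c : C0on J phi) by (intros y Hy; apply (reg_cont J f phi t); auto).
 assert (F0c : C0on J f) by (apply (f_C0 J f phi t); auto).
 assert (G0c : C0on J (fun x => f x * phi x)) by (apply C0_mult; auto).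
 assert (Loc : forall m0, J m0 -> exists e, 0 < e /\ (forall w, Rabs (w - m0) < e -> J w) /\
    forall m, Rabs (m - m0) < e / 2 -> phi m = Ih (fun x => f x * phi x) t (e/2) m / Ih f t (e/2) m /\ 0 < Ih f t (e/2) m).
 { intros m0 Hm0. destruct (Ho m0 Hm0) as [[e ep] He]. simpl in He. exists e. split; auto. split; auto.
   intros m Hm. destruct (Ih_id J f phi t m0 e m H ep He F0c Hm) as [E P]. split; auto.
   rewrite <- E. field. lra. }
 assert (P1c : C1on J phi).
 { intros m0 Hm0. destruct (Loc m0 Hm0) as [e [ep [He HL]]].
   set (W := fun m => Rabs (m - m0) < e / 2).
   assert (C1on W phi).
   { apply (C1_ext W (fun m => Ih (fun x => f x * phi x) t (e/2) m / Ih f t (e/2) m)). apply open_win.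
     intros m Hm. symmetry; apply HL, Hm.
     apply C1_div.
     { intros m Hm. eexists. apply (Ih_deriv _ t m0 e m); [lra|lra|intros w Hw; apply G0c, He, Hw|exact Hm]. }
     { intros m Hm. eexists. apply (Ih_deriv _ t m0 e m); [lra|lra|intros w Hw; apply F0c, He, Hw|exact Hm]. }
     intros m Hm. specialize (HL m Hm). lra. }
   apply H0. unfold W. rewrite Rminus_diag, Rabs_R0. lra. }
 assert (F1c : C1on J f) by (apply (f_C1 J f phi t); auto).
 assert (G1c : C1on J (fun x => f x * phi x)) by (apply C1_mult; auto).
 assert (P2c : C2on J phi).
 { intros m0 Hm0. destruct (Loc m0 Hm0) as [e [ep [He HL]]].
   set (W := fun m => Rabs (m - m0) < e / 2).
   assert (HW : openP W) by apply open_win.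
   assert (C2on W phi).
   { apply (C2_ext W (fun m => Ih (fun x => f x * phi x) t (e/2) m / Ih f t (e/2) m)); auto.
     intros m Hm. symmetry; apply HL, Hm.
     apply C2_div; auto.
     apply C2_by with (Dh (fun x => f x * phi x) t (e/2)); auto.
     intros m Hm. apply (Ih_deriv _ t m0 e m); [lra|lra|intros w Hw; apply G0c, He, Hw|exact Hm].
     apply (Dh_C1 J); auto.
     apply C2_by with (Dh f t (e/2)); auto.
     intros m Hm. apply (Ih_deriv _ t m0 e m); [lra|lra|intros w Hw; apply F0c, He, Hw|exact Hm].
     apply (Dh_C1 J); auto.
     intros m Hm. specialize (HL m Hm). lra. }
   apply H0. unfold W. rewrite Rminus_diag, Rabs_R0. lra. }
 split; auto. apply (f_C2 J f phi t); auto.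
Qed.

Lemma zero_deriv S F s l : openP S -> S s -> (forall s', S s' -> F s' = 0) -> is_derive F s l -> l = 0.
Proof. intros HS Hs HF Hd.
 assert (is_derive F s 0).
 { apply (is_derive_ext_loc (fun _ => 0)). apply (loc_open_imp S); auto. intros y Hy; symmetry; auto.
   apply (@is_derive_const R_AbsRing R_NormedModule). }
 rewrite <- (is_derive_unique _ _ _ Hd). apply is_derive_unique; auto. Qed.

Lemma C2_opp U u : openP U -> C2on U u -> C2on U (fun x => - u x).
Proof. intros HU Hu. apply (C2_ext U (fun x => (fun _ => -1) x * u x)); auto. intros; ring.
 apply C2_mult; auto. apply C2_const; auto. Qed.

Lemma C2_opp' U u : openP U -> C2on U (fun x => - u x) -> C2on U u.
Proof. intros HU Hu. apply (C2_ext U (fun x => - (fun y => - u y) x)); auto. intros; simpl; ring.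
 apply C2_opp; auto. Qed.

Lemma FE_oppf J f phi t : FE J f phi t -> FE J (fun x => - f x) phi t.
Proof. intros H x y Hx Hy. specialize (H x y Hx Hy). lra. Qed.
Lemma FE_oppp J f phi t : FE J f phi t -> FE J f (fun x => - phi x) t.
Proof. intros H x y Hx Hy. specialize (H x y Hx Hy). lra. Qed.

Lemma f_nonzero J f phi t : convexP J -> 0 < t < 1 -> FE J f phi t -> injP J phi ->
  (exists x0, J x0 /\ f x0 <> 0) -> forall x, J x -> f x <> 0.
Proof. intros Hc Ht HF Hi [x0 [Hx0 Hf0]] z Hz Hfz. apply Hf0.
 destruct (Req_dec x0 z) as [<-|Hne]; auto.
 pose proof (FE' J f phi t z x0 HF Hz Hx0) as E. rewrite Hfz in E.
 assert (Jm : J (t * z + (1 - t) * x0)) by (apply conv_comb; auto; lra).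
 assert (phi x0 - phi (t * z + (1 - t) * x0) <> 0).
 { apply Rminus_eq_contra. apply Hi; auto. intro. apply Hne. nra. }
 assert ((1 - t) * f x0 = 0).
 { apply (Rmult_eq_reg_r (phi x0 - phi (t * z + (1 - t) * x0))); auto. lra. }
 nra. Qed.

Lemma f_sign J f phi t : convexP J -> 0 < t < 1 -> FE J f phi t ->
  (forall x y, J x -> J y -> x < y -> phi x < phi y) \/ (forall x y, J x -> J y -> x < y -> phi y < phi x) ->
  (forall x, J x -> f x <> 0) -> forall x y, J x -> J y -> 0 < f x * f y.
Proof. intros Hc Ht HF Hm Hn.
 assert (K : forall x y, J x -> J y -> x < y -> 0 < f x * f y).
 { intros x y Hx Hy Hxy. pose proof (FE' J f phi t x y HF Hx Hy) as E.
   set (m := t * x + (1 - t) * y) in *.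
   assert (J m) by (apply conv_comb; auto; lra).
   assert (x < m < y) by (unfold m; split; nra).
   assert (Hs : 0 < (phi m - phi x) * (phi y - phi m)).
   { destruct Hm as [Hm|Hm].
     - pose proof (Hm x m ltac:(auto) ltac:(auto) ltac:(lra)). pose proof (Hm m y ltac:(auto) ltac:(auto) ltac:(lra)). nra.
     - pose proof (Hm x m ltac:(auto) ltac:(auto) ltac:(lra)). pose proof (Hm m y ltac:(auto) ltac:(auto) ltac:(lra)). nra. }
   pose proof (Hn x Hx). pose proof (Hn y Hy).
   assert (0 < f y * f y) by (apply Rsqr_pos_lt; auto).
   assert (Q : t * (f x * f y) * ((phi m - phi x) * (phi m - phi x)) = (1 - t) * (f y * f y) * ((phi m - phi x) * (phi y - phi m))).
   { transitivity (f y * (phi m - phi x) * (t * f x * (phi m - phi x))). ring. rewrite E. ring. }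
   assert (0 < (phi m - phi x) * (phi m - phi x)).
   { assert (phi m - phi x <> 0) by (intro Z; rewrite Z in Hs; lra). apply Rsqr_pos_lt; auto. }
   assert (0 < (1 - t) * (f y * f y) * ((phi m - phi x) * (phi y - phi m))).
   { apply Rmult_lt_0_compat; auto. apply Rmult_lt_0_compat; lra. }
   destruct (Rle_dec (f x * f y) 0); auto.
   assert (t * (f x * f y) * ((phi m - phi x) * (phi m - phi x)) <= 0).
   { apply Rmult_le_0_r. apply Rmult_le_0_l; lra. lra. }
   lra. lra. }
 intros x y Hx Hy. destruct (Rtotal_order x y) as [l|[e|g]].
 - apply K; auto.
 - subst. pose proof (Hn y Hy). apply Rsqr_pos_lt; auto.
 - rewrite Rmult_comm. apply K; auto.
Qed.

Lemma smooth_general J f phi t : openP J -> convexP J -> 0 < t < 1 -> FE J f phi t ->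
  (forall x y, J x -> J y -> x < y -> phi x < phi y) \/ (forall x y, J x -> J y -> x < y -> phi y < phi x) ->
  (exists x0, J x0 /\ f x0 <> 0) -> C2on J phi /\ C2on J f.
Proof. intros Ho Hc Ht HF Hm Hx0.
 assert (Hi : injP J phi).
 { intros x y Hx Hy Hne. destruct Hm as [Hm|Hm]; destruct (Rlt_dec x y).
   - pose proof (Hm x y Hx Hy r); lra.
   - pose proof (Hm y x Hy Hx ltac:(lra)); lra.
   - pose proof (Hm x y Hx Hy r); lra.
   - pose proof (Hm y x Hy Hx ltac:(lra)); lra. }
 pose proof (f_nonzero J f phi t Hc Ht HF Hi Hx0) as Hn.
 pose proof (f_sign J f phi t Hc Ht HF Hm Hn) as Hs.
 destruct Hx0 as [x0 [Jx0 _]].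
 assert (Hf : (forall x, J x -> 0 < f x) \/ (forall x, J x -> 0 < - f x)).
 { destruct (Rlt_dec 0 (f x0)).
   - left. intros x Hx. pose proof (Hs x0 x Jx0 Hx). nra.
   - right. intros x Hx. pose proof (Hs x0 x Jx0 Hx). pose proof (Hn x0 Jx0). nra. }
 destruct Hf as [Hf|Hf]; destruct Hm as [Hm|Hm].
 - apply (reg_smooth J f phi t). split; auto.
 - assert (Reg J f (fun x => - phi x) t) by (split; auto; [apply FE_oppp; auto | intros x y Hx Hy Hxy; specialize (Hm x y Hx Hy Hxy); lra]).
   destruct (reg_smooth _ _ _ _ H). split; auto. apply C2_opp'; auto.
 - assert (Reg J (fun x => - f x) phi t) by (split; auto; apply FE_oppf; auto).
   destruct (reg_smooth _ _ _ _ H). split; auto. apply C2_opp'; auto.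
 - assert (Reg J (fun x => - f x) (fun x => - phi x) t) by (split; auto; [apply FE_oppp, FE_oppf; auto | intros x y Hx Hy Hxy; specialize (Hm x y Hx Hy Hxy); lra]).
   destruct (reg_smooth _ _ _ _ H). split; apply C2_opp'; auto.
Qed.

Lemma open_pre2 J a1 b1 a2 b2 : openP J -> Rabs a1 <= 1 -> Rabs a2 <= 1 ->
  openP (fun s => J (a1 * s + b1) /\ J (a2 * s + b2)).
Proof. intros HJ H1 H2 s [Hs1 Hs2]. destruct (HJ _ Hs1) as [[e1 p1] E1]. destruct (HJ _ Hs2) as [[e2 p2] E2].
 simpl in *. assert (0 < Rmin e1 e2) by (apply Rmin_case; lra). exists (mkposreal _ H). simpl.
 intros y Hy. pose proof (Rmin_l e1 e2). pose proof (Rmin_r e1 e2). split.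
 - apply E1. replace (a1 * y + b1 - (a1 * s + b1)) with (a1 * (y - s)) by ring. rewrite Rabs_mult.
   assert (Rabs a1 * Rabs (y - s) <= Rabs (y - s)). { pose proof (Rabs_pos (y - s)). nra. } lra.
 - apply E2. replace (a2 * y + b2 - (a2 * s + b2)) with (a2 * (y - s)) by ring. rewrite Rabs_mult.
   assert (Rabs a2 * Rabs (y - s) <= Rabs (y - s)). { pose proof (Rabs_pos (y - s)). nra. } lra.
Qed.

Lemma second_id J f phi t x y : openP J -> convexP J -> 0 < t < 1 -> FE J f phi t ->
  C2on J f -> C2on J phi -> J x -> J y ->
  let g := fun z => f z * phi z in
  let m := t * x + (1 - t) * y in
  t * (1 - t) ^ 2 * (Derive (Derive g) x - phi m * Derive (Derive f) x)
  + (1 - t) * t ^ 2 * (Derive (Derive g) y - phi m * Derive (Derive f) y) = 0.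
Proof. intros Ho Hc Ht HF Hf Hp Hx Hy g m.
 assert (Hg : C2on J g) by (apply C2_mult; auto).
 set (S := fun s => J (-(1-t) * s + m) /\ J (t * s + m)).
 assert (HS : openP S).
 { apply open_pre2; auto. rewrite Rabs_Ropp, Rabs_right; lra. rewrite Rabs_right; lra. }
 set (s0 := y - x).
 assert (X0 : -(1-t) * s0 + m = x) by (unfold s0, m; ring).
 assert (Y0 : t * s0 + m = y) by (unfold s0, m; ring).
 assert (S0 : S s0) by (unfold S; rewrite X0, Y0; auto).
 set (H := fun s => t * g (-(1-t) * s + m) + (1-t) * g (t * s + m) - phi m * (t * f (-(1-t) * s + m) + (1-t) * f (t * s + m))).
 assert (H0 : forall s, S s -> H s = 0).
 { intros s [S1 S2]. unfold H, g. pose proof (HF _ _ S1 S2) as E.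
   replace (t * (- (1 - t) * s + m) + (1 - t) * (t * s + m)) with m in E by ring. lra. }
 set (H1 := fun s => t * (-(1-t)) * Derive g (-(1-t) * s + m) + (1-t) * t * Derive g (t * s + m)
     - phi m * (t * (-(1-t)) * Derive f (-(1-t) * s + m) + (1-t) * t * Derive f (t * s + m))).
 assert (D1 : forall s, S s -> is_derive H s (H1 s)).
 { intros s [S1 S2]. unfold H, H1.
   destruct (Hg _ S1). destruct (Hg _ S2). destruct (Hf _ S1). destruct (Hf _ S2).
   auto_derive. repeat split; auto. eta_D. ring. }
 assert (H10 : forall s, S s -> H1 s = 0).
 { intros s Hs. apply (zero_deriv S H s); auto. }
 assert (D2 : is_derive H1 s0 (t * (1 - t) ^ 2 * (Derive (Derive g) x - phi m * Derive (Derive f) x)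
  + (1 - t) * t ^ 2 * (Derive (Derive g) y - phi m * Derive (Derive f) y))).
 { destruct S0 as [S1 S2]. unfold H1.
   destruct (Hg _ S1). destruct (Hg _ S2). destruct (Hf _ S1). destruct (Hf _ S2).
   auto_derive. repeat split; auto. rewrite X0, Y0. eta_D. ring. }
 apply (zero_deriv S H1 s0); auto.
Qed.

Lemma D2_mult U u v x : openP U -> C2on U u -> C2on U v -> U x ->
  Derive (Derive (fun z => u z * v z)) x = Derive (Derive u) x * v x + 2 * Derive u x * Derive v x + u x * Derive (Derive v) x.
Proof. intros HU Hu Hv Hx.
 rewrite (Derive_ext_open U _ (fun z => Derive u z * v z + u z * Derive v z)); auto.
 - destruct (Hu x Hx). destruct (Hv x Hx). apply is_derive_unique. auto_derive. repeat split; auto. eta_D. ring.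
 - intros z Hz. destruct (Hu z Hz). destruct (Hv z Hz). apply Derive_mult; auto.
Qed.

Lemma open_C2_ex U u x : openP U -> C2on U u -> U x -> ex_derive (Derive u) x.
Proof. intros _ H Hx; apply H, Hx. Qed.

Lemma i_to_ii (a b : Rbar) (phi f : R -> R) (t : R) :
  strictly_monotone_on a b phi ->
  (exists x0, in_I a b x0 /\ f x0 <> 0) ->
  0 < t < 1 ->
  (forall x y, in_I a b x -> in_I a b y ->
      (t * f x + (1 - t) * f y) * phi (t * x + (1 - t) * y)
      = t * f x * phi x + (1 - t) * f y * phi y) ->
  ((forall x, in_I a b x -> f x <> 0) /\
    twice_diff_on a b f /\ twice_diff_on a b phi /\
    (forall x, in_I a b x ->
       2 * Derive f x * Derive phi x + f x * Derive_n phi 2 x = 0) /\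
    (exists p : R, (t - 1/2) * p = 0 /\
       forall x, in_I a b x -> Derive_n f 2 x = p * f x)).
Proof.
 intros Hm Hx0 Ht HF.
 set (J := in_I a b).
 assert (Ho : openP J) by apply in_I_open.
 assert (Hc : convexP J) by (intros x y z; apply in_I_between).
 destruct (smooth_general J f phi t Ho Hc Ht HF Hm Hx0) as [Hp Hf].
 assert (Hi : injP J phi).
 { intros x y Hx Hy Hne. destruct Hm as [Hm|Hm]; destruct (Rlt_dec x y).
   - pose proof (Hm x y Hx Hy r); lra.
   - pose proof (Hm y x Hy Hx ltac:(lra)); lra.
   - pose proof (Hm x y Hx Hy r); lra.
   - pose proof (Hm y x Hy Hx ltac:(lra)); lra. }
 pose proof (f_nonzero J f phi t Hc Ht HF Hi Hx0) as Hn.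
 set (g := fun z => f z * phi z).
 assert (G2 : forall z, J z -> Derive (Derive g) z = phi z * Derive (Derive f) z).
 { intros z Hz. pose proof (second_id J f phi t z z Ho Hc Ht HF Hf Hp Hz Hz) as E. cbv zeta in E.
   replace (t * z + (1 - t) * z) with z in E by ring. fold g in E.
   assert (t * (1 - t) * (Derive (Derive g) z - phi z * Derive (Derive f) z) = 0).
   { rewrite <- E. ring. }
   apply Rmult_integral in H. destruct H. nra. lra. }
 assert (Prod : forall z, J z -> 2 * Derive f z * Derive phi z + f z * Derive (Derive phi) z = 0).
 { intros z Hz. pose proof (D2_mult J f phi z Ho Hf Hp Hz) as E. fold g in E. rewrite G2 in E by auto. lra. }
 set (q := fun z => Derive (Derive f) z / f z).
 assert (Q : forall x y, J x -> J y -> x < y -> t ^ 2 * q y = (1 - t) ^ 2 * q x).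
 { intros x y Hx Hy Hxy. pose proof (second_id J f phi t x y Ho Hc Ht HF Hf Hp Hx Hy) as E. cbv zeta in E.
   fold g in E. rewrite !G2 in E by auto.
   set (m := t * x + (1 - t) * y) in *.
   pose proof (FE' J f phi t x y HF Hx Hy) as E2. fold m in E2.
   assert (Jm : J m) by (apply conv_comb; auto; lra).
   assert (A0 : (1 - t) * f y * (phi y - phi m) <> 0).
   { apply Rmult_integral_contrapositive. split. apply Rmult_integral_contrapositive. split. lra. auto.
     apply Rminus_eq_contra. apply Hi; auto. unfold m. intro. nra. }
   set (A := (1 - t) * f y * (phi y - phi m)) in *.
   assert (Z : A * (t ^ 2 * Derive (Derive f) y * f x - (1 - t) ^ 2 * Derive (Derive f) x * f y) = 0).
   { transitivity (f x * f y * (t * (1 - t) ^ 2 * (phi x * Derive (Derive f) x - phi m * Derive (Derive f) x) +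
       (1 - t) * t ^ 2 * (phi y * Derive (Derive f) y - phi m * Derive (Derive f) y))).
     - unfold A. transitivity (t ^ 2 * Derive (Derive f) y * f x * ((1 - t) * f y * (phi y - phi m)) - (1 - t) ^ 2 * Derive (Derive f) x * f y * (t * f x * (phi m - phi x))).
       rewrite E2. unfold A. ring. ring.
     - rewrite E. ring. }
   apply Rmult_integral in Z. destruct Z as [Z|Z]. contradiction.
   unfold q. pose proof (Hn x Hx). pose proof (Hn y Hy). field_simplify; auto. 
   apply (Rmult_eq_reg_r (f x * f y)). field_simplify; auto. lra.
   apply Rmult_integral_contrapositive; auto. }
 destruct Hx0 as [x0 [Jx0 Hfx0]].
 assert (T0 : forall z, J z -> (2 * t - 1) * q z = 0).
 { intros z Hz. destruct (Ho z Hz) as [[e ep] He]. simpl in He.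
   assert (J (z - e/2)) by (apply He; rewrite Rabs_left; lra).
   assert (J (z + e/2)) by (apply He; rewrite Rabs_right; lra).
   pose proof (Q (z - e/2) z ltac:(auto) Hz ltac:(lra)).
   pose proof (Q z (z + e/2) Hz ltac:(auto) ltac:(lra)).
   pose proof (Q (z - e/2) (z + e/2) ltac:(auto) ltac:(auto) ltac:(lra)).
   assert (q z = q (z + e/2)) by (apply (Rmult_eq_reg_l (t ^ 2)); nra).
   replace (2 * t - 1) with (t ^ 2 - (1 - t) ^ 2) by ring. nra. }
 assert (Qc : forall z, J z -> q z = q x0).
 { intros z Hz. destruct (Req_dec t (1/2)) as [Eh|Eh].
   - destruct (Rtotal_order z x0) as [l|[e|g']].
     + pose proof (Q z x0 Hz Jx0 l). subst t. nra.
     + subst; auto.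
     + pose proof (Q x0 z Jx0 Hz g'). subst t. nra.
   - pose proof (T0 z Hz). pose proof (T0 x0 Jx0).
     assert (2 * t - 1 <> 0) by (intro; apply Eh; lra).
     apply Rmult_integral in H. apply Rmult_integral in H0. destruct H, H0; try contradiction. lra. }
 split; [exact Hn|]. split; [exact Hf|]. split; [exact Hp|]. split.
 - intros z Hz. change (Derive_n phi 2 z) with (Derive (Derive phi) z). apply Prod, Hz.
 - exists (q x0). split.
   + pose proof (T0 x0 Jx0). nra.
   + intros z Hz. change (Derive_n f 2 z) with (Derive (Derive f) z). rewrite <- (Qc z Hz).
     unfold q. field. apply Hn, Hz.
Qed.

Lemma sinh_k k x : is_derive (fun y => sinh (k * y)) x (k * cosh (k * x)).
Proof. apply (@is_derive_comp R_AbsRing R_NormedModule sinh (fun y => k * y) x (cosh (k * x)) k).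
 apply is_derive_Reals, derivable_pt_lim_sinh. auto_derive; auto. ring. Qed.
Lemma cosh_k k x : is_derive (fun y => cosh (k * y)) x (k * sinh (k * x)).
Proof. apply (@is_derive_comp R_AbsRing R_NormedModule cosh (fun y => k * y) x (sinh (k * x)) k).
 apply is_derive_Reals, derivable_pt_lim_cosh. auto_derive; auto. ring. Qed.

Lemma cosh2_sinh2 u : cosh u * cosh u - sinh u * sinh u = 1.
Proof. unfold cosh, sinh. assert (exp u * exp (- u) = 1).
 { rewrite <- exp_plus. replace (u + - u) with 0 by ring. apply exp_0. } nra. Qed.

Lemma SC_deriv p : exists S1 C1 : R -> R, forall x,
  is_derive (S_ p) x (S1 x) /\ is_derive S1 x (p * S_ p x) /\
  is_derive (C_ p) x (C1 x) /\ is_derive C1 x (p * C_ p x) /\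
  S_ p x * C1 x - S1 x * C_ p x <> 0.
Proof. unfold S_, C_. destruct (Rlt_dec p 0) as [Hp|Hp].
 - set (k := sqrt (- p)). assert (Hk : k * k = - p) by (apply sqrt_sqrt; lra).
   assert (k0 : 0 < k) by (apply sqrt_lt_R0; lra). clearbody k.
   exists (fun x => k * cos (k * x)), (fun x => - k * sin (k * x)). intros x.
   split; [|split; [|split; [|split]]].
   + auto_derive; auto. ring.
   + auto_derive; auto. replace p with (- (k * k)) by lra. ring.
   + auto_derive; auto. ring.
   + auto_derive; auto. replace p with (- (k * k)) by lra. ring.
   + pose proof (sin2_cos2 (k * x)). unfold Rsqr in H. 
     replace (sin (k * x) * (- k * sin (k * x)) - k * cos (k * x) * cos (k * x)) with (- k * (sin (k * x) * sin (k * x) + cos (k * x) * cos (k * x))) by ring.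
     rewrite H. lra.
 - destruct (Req_EM_T p 0) as [H0|H0].
   + exists (fun _ => 1), (fun _ => 0). intros x. split; [|split; [|split; [|split]]].
     * auto_derive; auto.
     * auto_derive; auto. subst; ring.
     * auto_derive; auto.
     * auto_derive; auto. subst; ring.
     * lra.
   + set (k := sqrt p). assert (Hk : k * k = p) by (apply sqrt_sqrt; lra).
     assert (k0 : 0 < k) by (apply sqrt_lt_R0; lra). clearbody k.
     exists (fun x => k * cosh (k * x)), (fun x => k * sinh (k * x)). intros x.
     split; [|split; [|split; [|split]]].
     * apply sinh_k.
     * replace (p * sinh (k * x)) with (k * (k * sinh (k * x))) by (rewrite <- Hk; ring).
       apply (is_derive_scal (fun y => cosh (k * y))). apply cosh_k.
     * apply cosh_k.
     * replace (p * cosh (k * x)) with (k * (k * cosh (k * x))) by (rewrite <- Hk; ring).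
       apply (is_derive_scal (fun y => sinh (k * y))). apply sinh_k.
     * pose proof (cosh2_sinh2 (k * x)).
       replace (sinh (k * x) * (k * sinh (k * x)) - k * cosh (k * x) * cosh (k * x)) with (- k * (cosh (k * x) * cosh (k * x) - sinh (k * x) * sinh (k * x))) by ring.
       rewrite H. lra.
Qed.

(* addition formula: t u(x) + (1-t) u(y) = kappa * u(m) *)
Lemma SC_mid p x y : 
  (S_ p x + S_ p y) / 2 = S_ p ((x + y) / 2) * C_ p ((y - x) / 2) /\
  (C_ p x + C_ p y) / 2 = C_ p ((x + y) / 2) * C_ p ((y - x) / 2).
Proof. unfold S_, C_.
 assert (Ex : forall k, k * x = k * ((x + y) / 2) - k * ((y - x) / 2)) by (intros; field).
 assert (Ey : forall k, k * y = k * ((x + y) / 2) + k * ((y - x) / 2)) by (intros; field).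
 destruct (Rlt_dec p 0).
 - rewrite (Ex (sqrt (- p))), (Ey (sqrt (- p))). rewrite sin_minus, sin_plus, cos_minus, cos_plus. split; field.
 - destruct (Req_EM_T p 0). split; field.
   rewrite (Ex (sqrt p)), (Ey (sqrt p)).
   set (a := sqrt p * ((x + y) / 2)). set (b := sqrt p * ((y - x) / 2)).
   unfold sinh, cosh. unfold Rminus. rewrite !Ropp_plus_distr, !exp_plus, !Ropp_involutive.
   split; field.
Qed.

Definition Wr (u v : R -> R) (z : R) := u z * Derive v z - Derive u z * v z.

Lemma wr_const J u v p : convexP J -> C2on J u -> C2on J v ->
  (forall z, J z -> Derive (Derive u) z = p * u z) -> (forall z, J z -> Derive (Derive v) z = p * v z) ->
  forall x y, J x -> J y -> Wr u v x = Wr u v y.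
Proof. intros Hc Hu Hv Eu Ev.
 assert (K : forall x y, J x -> J y -> x < y -> Wr u v x = Wr u v y).
 { intros x y Hx Hy Hxy. apply (@eq_is_derive R_NormedModule); auto.
   intros z Hz. assert (Jz : J z) by (apply (Hc x y); auto).
   destruct (Hu z Jz). destruct (Hv z Jz). unfold Wr. auto_derive. repeat split; auto.
   eta_D. rewrite Eu, Ev by auto. change (zero : R) with 0. ring. }
 intros x y Hx Hy. destruct (Rtotal_order x y) as [l|[e|g]].
 apply K; auto. subst; auto. symmetry; apply K; auto. Qed.

Lemma SC_C2 p : exists S1 C1 : R -> R, forall x,
  Derive (S_ p) x = S1 x /\ Derive (C_ p) x = C1 x /\
  ex_derive (S_ p) x /\ ex_derive (C_ p) x /\ ex_derive (Derive (S_ p)) x /\ ex_derive (Derive (C_ p)) x /\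
  Derive (Derive (S_ p)) x = p * S_ p x /\ Derive (Derive (C_ p)) x = p * C_ p x /\
  S_ p x * C1 x - S1 x * C_ p x <> 0.
Proof. destruct (SC_deriv p) as [S1 [C1 H]]. exists S1, C1. intros x.
 assert (ES : forall z, Derive (S_ p) z = S1 z) by (intros z; apply is_derive_unique, H).
 assert (EC : forall z, Derive (C_ p) z = C1 z) by (intros z; apply is_derive_unique, H).
 destruct (H x) as [h1 [h2 [h3 [h4 h5]]]].
 split; auto. split; auto. split. eexists; eauto. split. eexists; eauto.
 split. apply (ex_derive_ext S1). intros; symmetry; auto. eexists; eauto.
 split. apply (ex_derive_ext C1). intros; symmetry; auto. eexists; eauto.
 split. rewrite (Derive_ext _ S1) by auto. apply is_derive_unique; auto.
 split. rewrite (Derive_ext _ C1) by auto. apply is_derive_unique; auto.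
 auto. Qed.

Lemma ii_to_iii (a b : Rbar) (phi f : R -> R) (t : R) :
  strictly_monotone_on a b phi ->
  (exists x0, in_I a b x0 /\ f x0 <> 0) ->
  ((forall x, in_I a b x -> f x <> 0) /\
    twice_diff_on a b f /\ twice_diff_on a b phi /\
    (forall x, in_I a b x ->
       2 * Derive f x * Derive phi x + f x * Derive_n phi 2 x = 0) /\
    (exists p : R, (t - 1/2) * p = 0 /\
       forall x, in_I a b x -> Derive_n f 2 x = p * f x)) ->
   ((forall x, in_I a b x -> f x <> 0) /\
    exists p : R, (t - 1/2) * p = 0 /\
      pair_equiv_on a b f (fun x => f x * phi x) (S_ p) (C_ p)).
Proof.
 intros Hm [x0 [Jx0 _]] [Hn [Hf [Hp [Hode [p [Hp0 Hfp]]]]]].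
 set (J := in_I a b) in *.
 assert (Ho : openP J) by apply in_I_open.
 assert (Hc : convexP J) by (intros x y z; apply in_I_between).
 split; auto. exists p. split; auto.
 set (g := fun x => f x * phi x).
 assert (Hg : C2on J g) by (apply C2_mult; auto).
 assert (F2 : forall z, J z -> Derive (Derive f) z = p * f z) by exact Hfp.
 assert (G2 : forall z, J z -> Derive (Derive g) z = p * g z).
 { intros z Hz. unfold g. rewrite (D2_mult J f phi z Ho Hf Hp Hz). rewrite F2 by auto.
   pose proof (Hode z Hz). change (Derive_n phi 2 z) with (Derive (Derive phi) z) in H. lra. }
 set (c := Wr f g x0).
 assert (Wfg : forall z, J z -> Wr f g z = c) by (intros; apply (wr_const J f g p); auto).
 assert (c0 : c <> 0).
 { intro Hc0. destruct (Ho x0 Jx0) as [[e ep] He]. simpl in He.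
   assert (J1 : J (x0 + e/2)) by (apply He; rewrite Rabs_right; lra).
   assert (D0 : forall z, J z -> Derive phi z = 0).
   { intros z Hz. specialize (Wfg z Hz). rewrite Hc0 in Wfg. unfold Wr, g in Wfg.
     destruct (Hf z Hz). destruct (Hp z Hz).
     rewrite Derive_mult in Wfg by auto. pose proof (Hn z Hz).
     assert (f z * f z * Derive phi z = 0) by (rewrite <- Wfg; ring).
     apply Rmult_integral in H4. destruct H4; auto. apply Rmult_integral in H4. destruct H4; contradiction. }
   assert (phi x0 = phi (x0 + e/2)).
   { apply (@eq_is_derive R_NormedModule). intros z Hz.
     assert (Jz : J z) by (apply (Hc x0 (x0 + e/2)); auto).
     assert (is_derive phi z (Derive phi z)) by (apply Derive_correct; apply Hp, Jz). rewrite (D0 z Jz) in H. exact H. lra. }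
   destruct Hm as [Hm|Hm]; specialize (Hm x0 (x0 + e/2) Jx0 J1 ltac:(lra)); lra. }
 destruct (SC_C2 p) as [S1 [C1 HSC]].
 assert (SC2 : C2on J (S_ p)) by (intros z _; destruct (HSC z) as [? [? [? [? [? ?]]]]]; split; auto).
 assert (CC2 : C2on J (C_ p)) by (intros z _; destruct (HSC z) as [? [? [? [? [? [? ?]]]]]]; split; auto).
 assert (S2 : forall z, J z -> Derive (Derive (S_ p)) z = p * S_ p z) by (intros z _; apply HSC).
 assert (C2' : forall z, J z -> Derive (Derive (C_ p)) z = p * C_ p z) by (intros z _; apply HSC).
 assert (Rep : forall u, C2on J u -> (forall z, J z -> Derive (Derive u) z = p * u z) ->
   forall z, J z -> u z = (Wr u g x0 / c) * f z + (Wr f u x0 / c) * g z).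
 { intros u Hu Eu z Hz.
   assert (A1 : Wr u g z = Wr u g x0) by (apply (wr_const J u g p); auto).
   assert (A2 : Wr f u z = Wr f u x0) by (apply (wr_const J f u p); auto).
   specialize (Wfg z Hz). rewrite <- A1, <- A2. unfold Wr in *.
   apply (Rmult_eq_reg_l c); auto. field_simplify; auto. rewrite <- Wfg. field; auto. }
 exists (Wr (S_ p) g x0 / c), (Wr f (S_ p) x0 / c), (Wr (C_ p) g x0 / c), (Wr f (C_ p) x0 / c).
 split.
 - destruct (HSC x0) as [e1 [e2 [_ [_ [_ [_ [_ [_ W]]]]]]]].
   assert (Id : Wr (S_ p) g x0 * Wr f (C_ p) x0 - Wr (C_ p) g x0 * Wr f (S_ p) x0 = c * Wr (S_ p) (C_ p) x0).
   { unfold c, Wr. ring. }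
   assert (Wr (S_ p) (C_ p) x0 <> 0) by (unfold Wr; rewrite e1, e2; auto).
   intro E. apply H. apply (Rmult_eq_reg_l c); auto. rewrite <- Id.
   apply (Rmult_eq_reg_l (/ (c * c))). 
   replace (/ (c * c) * (Wr (S_ p) g x0 * Wr f (C_ p) x0 - Wr (C_ p) g x0 * Wr f (S_ p) x0))
     with (Wr (S_ p) g x0 / c * (Wr f (C_ p) x0 / c) - Wr (C_ p) g x0 / c * (Wr f (S_ p) x0 / c)) by (field; auto).
   rewrite E. field; auto. apply Rinv_neq_0_compat. apply Rmult_integral_contrapositive; auto.
 - intros z Hz. split; apply Rep; auto.
Qed.

Lemma lin_SC p al be : (forall z, ex_derive (fun w => al * S_ p w + be * C_ p w) z /\
   ex_derive (Derive (fun w => al * S_ p w + be * C_ p w)) z) /\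
   forall z, Derive (Derive (fun w => al * S_ p w + be * C_ p w)) z = p * (al * S_ p z + be * C_ p z).
Proof. destruct (SC_C2 p) as [S1 [C1 H]].
 assert (D1 : forall w, Derive (fun w => al * S_ p w + be * C_ p w) w = al * Derive (S_ p) w + be * Derive (C_ p) w).
 { intros w. destruct (H w) as [_ [_ [h1 [h2 _]]]]. apply is_derive_unique. auto_derive. repeat split; auto. eta_D. ring. }
 split.
 - intros z. destruct (H z) as [_ [_ [h1 [h2 [h3 [h4 _]]]]]]. split.
   + auto_derive. repeat split; auto.
   + apply (ex_derive_ext (fun w => al * Derive (S_ p) w + be * Derive (C_ p) w)). intros; symmetry; auto.
     auto_derive. repeat split; auto.
 - intros z. rewrite (Derive_ext _ (fun w => al * Derive (S_ p) w + be * Derive (C_ p) w)) by auto.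
   destruct (H z) as [_ [_ [h1 [h2 [h3 [h4 [h5 [h6 _]]]]]]]]. apply is_derive_unique. auto_derive. repeat split; auto.
   eta_D. rewrite h5, h6. ring.
Qed.

Lemma iii_to_ii (a b : Rbar) (phi f : R -> R) (t : R) :
  ((forall x, in_I a b x -> f x <> 0) /\
    exists p : R, (t - 1/2) * p = 0 /\
      pair_equiv_on a b f (fun x => f x * phi x) (S_ p) (C_ p)) ->
  ((forall x, in_I a b x -> f x <> 0) /\
    twice_diff_on a b f /\ twice_diff_on a b phi /\
    (forall x, in_I a b x ->
       2 * Derive f x * Derive phi x + f x * Derive_n phi 2 x = 0) /\
    (exists p : R, (t - 1/2) * p = 0 /\
       forall x, in_I a b x -> Derive_n f 2 x = p * f x)).
Proof.
 intros [Hn [p [Hp0 [c1 [c2 [c3 [c4 [Hd Hrep]]]]]]]].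
 set (J := in_I a b) in *.
 assert (Ho : openP J) by apply in_I_open.
 set (D := c1 * c4 - c3 * c2). assert (D0 : D <> 0) by (unfold D; lra).
 set (LF := fun w => (c4 / D) * S_ p w + (- c2 / D) * C_ p w).
 set (LG := fun w => (- c3 / D) * S_ p w + (c1 / D) * C_ p w).
 assert (EF : forall z, J z -> f z = LF z).
 { intros z Hz. destruct (Hrep z Hz) as [h1 h2]. unfold LF. rewrite h1, h2. unfold D in *. field; auto. }
 assert (EG : forall z, J z -> f z * phi z = LG z).
 { intros z Hz. destruct (Hrep z Hz) as [h1 h2]. unfold LG. rewrite h1, h2. unfold D in *. field; auto. }
 destruct (lin_SC p (c4 / D) (- c2 / D)) as [LF2 LFd]. fold LF in LF2, LFd.
 destruct (lin_SC p (- c3 / D) (c1 / D)) as [LG2 LGd]. fold LG in LG2, LGd.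
 assert (CF : C2on J LF) by (intros z _; apply LF2).
 assert (CG : C2on J LG) by (intros z _; apply LG2).
 assert (Hf : C2on J f) by (apply (C2_ext J LF); auto; intros; symmetry; auto).
 assert (Hp : C2on J phi).
 { apply (C2_ext J (fun z => LG z / LF z)); auto.
   intros z Hz. rewrite <- EF, <- EG by auto. field. auto.
   apply C2_div; auto. intros z Hz. rewrite <- EF by auto. auto. }
 assert (DD : forall u v, C2on J u -> (forall z, J z -> u z = v z) -> forall z, J z -> Derive (Derive u) z = Derive (Derive v) z).
 { intros u v Hu Huv z Hz. apply (Derive_ext_open J); auto. apply (Derive_ext_open J); auto. }
 assert (F2 : forall z, J z -> Derive (Derive f) z = p * f z).
 { intros z Hz. rewrite (DD f LF Hf EF z Hz), LFd, EF by auto. reflexivity. }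
 assert (G2 : forall z, J z -> Derive (Derive (fun w => f w * phi w)) z = p * (f z * phi z)).
 { intros z Hz. rewrite (DD _ LG (C2_mult J f phi Ho Hf Hp) EG z Hz), LGd, EG by auto. reflexivity. }
 split; [exact Hn|]. split; [exact Hf|]. split; [exact Hp|]. split.
 - intros z Hz. change (Derive_n phi 2 z) with (Derive (Derive phi) z).
   pose proof (D2_mult J f phi z Ho Hf Hp Hz) as E. rewrite G2, F2 in E by auto. lra.
 - exists p. split; [exact Hp0|]. intros z Hz. apply F2, Hz.
Qed.

Lemma iii_to_i (a b : Rbar) (phi f : R -> R) (t : R) : 0 < t < 1 ->
  ((forall x, in_I a b x -> f x <> 0) /\
    exists p : R, (t - 1/2) * p = 0 /\
      pair_equiv_on a b f (fun x => f x * phi x) (S_ p) (C_ p)) ->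
  (forall x y, in_I a b x -> in_I a b y ->
      (t * f x + (1 - t) * f y) * phi (t * x + (1 - t) * y)
      = t * f x * phi x + (1 - t) * f y * phi y).
Proof.
 intros Ht [Hn [p [Hp0 [c1 [c2 [c3 [c4 [Hd Hrep]]]]]]]] x y Hx Hy.
 set (m := t * x + (1 - t) * y).
 assert (Hm : in_I a b m) by (apply in_I_comb; auto; lra).
 set (D := c1 * c4 - c3 * c2). assert (D0 : D <> 0) by (unfold D; lra).
 assert (EF : forall z, in_I a b z -> f z = (c4 / D) * S_ p z + (- c2 / D) * C_ p z).
 { intros z Hz. destruct (Hrep z Hz) as [h1 h2]. rewrite h1, h2. unfold D in *. field; auto. }
 assert (EG : forall z, in_I a b z -> f z * phi z = (- c3 / D) * S_ p z + (c1 / D) * C_ p z).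
 { intros z Hz. destruct (Hrep z Hz) as [h1 h2]. rewrite h1, h2. unfold D in *. field; auto. }
 assert (K : exists k, forall al be, t * (al * S_ p x + be * C_ p x) + (1 - t) * (al * S_ p y + be * C_ p y)
     = k * (al * S_ p m + be * C_ p m)).
 { destruct (Req_dec t (1/2)) as [Eh|Eh].
   - exists (C_ p ((y - x) / 2)). intros al be. destruct (SC_mid p x y) as [h1 h2].
     replace m with ((x + y) / 2) by (unfold m; rewrite Eh; field).
     rewrite Eh. replace (1 - 1/2) with (1/2) by field.
     transitivity (al * ((S_ p x + S_ p y) / 2) + be * ((C_ p x + C_ p y) / 2)). field.
     rewrite h1, h2. ring.
   - assert (p = 0). { apply Rmult_integral in Hp0. destruct Hp0; auto. lra. }
     subst p. exists 1. intros al be. unfold S_, C_.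
     destruct (Rlt_dec 0 0). lra. destruct (Req_EM_T 0 0); [|congruence].
     unfold m. ring. }
 destruct K as [k K].
 pose proof (Hn m Hm) as Hfm.
 assert (phi m = ((- c3 / D) * S_ p m + (c1 / D) * C_ p m) / ((c4 / D) * S_ p m + (- c2 / D) * C_ p m)).
 { rewrite <- EF, <- EG by auto. field; auto. }
 assert (NZ : (c4 / D) * S_ p m + (- c2 / D) * C_ p m <> 0) by (rewrite <- EF; auto).
 rewrite H.
 rewrite (Rmult_assoc t (f x)), (Rmult_assoc (1 - t) (f y)), !EG by auto.
 rewrite (EF x Hx), (EF y Hy).
 rewrite K, K. field. split; auto. intro Z. apply NZ. unfold Rdiv. replace (c4 * / D * S_ p m + - c2 * / D * C_ p m) with (/ D * (c4 * S_ p m + - c2 * C_ p m)) by ring. rewrite Z. ring.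
Qed.

Theorem theorem2p2 (a b : Rbar) (phi f : R -> R) (t : R) :
  Rbar_lt a b ->
  strictly_monotone_on a b phi ->
  (exists x0, in_I a b x0 /\ f x0 <> 0) ->
  0 < t < 1 ->
  ((forall x y, in_I a b x -> in_I a b y ->
      (t * f x + (1 - t) * f y) * phi (t * x + (1 - t) * y)
      = t * f x * phi x + (1 - t) * f y * phi y)
   <->
   ((forall x, in_I a b x -> f x <> 0) /\
    twice_diff_on a b f /\ twice_diff_on a b phi /\
    (forall x, in_I a b x ->
       2 * Derive f x * Derive phi x + f x * Derive_n phi 2 x = 0) /\
    (exists p : R, (t - 1/2) * p = 0 /\
       forall x, in_I a b x -> Derive_n f 2 x = p * f x)))
  /\
  ((forall x, in_I a b x -> f x <> 0) /\
    twice_diff_on a b f /\ twice_diff_on a b phi /\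
    (forall x, in_I a b x ->
       2 * Derive f x * Derive phi x + f x * Derive_n phi 2 x = 0) /\
    (exists p : R, (t - 1/2) * p = 0 /\
       forall x, in_I a b x -> Derive_n f 2 x = p * f x)
   <->
   ((forall x, in_I a b x -> f x <> 0) /\
    exists p : R, (t - 1/2) * p = 0 /\
      pair_equiv_on a b f (fun x => f x * phi x) (S_ p) (C_ p))).
Proof.
  intros Hab Hm Hx0 Ht. split; split.
  - intros HF. apply i_to_ii; auto.
  - intros H. apply (iii_to_i a b phi f t Ht). apply (ii_to_iii a b phi f t Hm Hx0 H).
  - intros H. apply (ii_to_iii a b phi f t Hm Hx0 H).
  - intros H. apply (iii_to_ii a b phi f t H).
Qed.
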